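(* Let $H$ be a finite simple graph with $n=|V(H)|\ge1$ vertices, chromatic number $\chi=\chi(H)$, and $m'(H)$ non-edges. Then $$\left\lceil \frac{n}{\chi} \right\rceil \left( n - \frac{\chi}{2}\left\lceil\frac{n}{\chi}-1\right\rceil\right) = n+m'(H)$$ holds if and only if $H$ is a Turán graph.
   Context: All graphs are finite and simple. A non-edge of $H$ is an unordered pair of distinct non-adjacent vertices. The Turán graph $T(n,r)$ is the complete $r$-partite graph on $n$ vertices whose $r$ classes have sizes as equal as possible (any two class sizes differ by at most one); a Turán graph is a graph isomorphic to some $T(n,r)$. *)

(* Defs.v *)
From mathcomp Require Import all_boot all_order all_algebra.
Set Implicit Arguments. Unset Strict Implicit. Unset Printing Implicit Defensive.
Import Order.TTheory GRing.Theory Num.Theory.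

Definition simple_graph (T : finType) (e : rel T) : Prop :=
  symmetric e /\ irreflexive e.

Definition colorable (T : finType) (e : rel T) (k : nat) : bool :=
  [exists f : {ffun T -> 'I_k}, [forall x, forall y, e x y ==> (f x != f y)]].

(* chromatic number: least k <= #|T| admitting a proper k-colouring
   (for a loopless graph, k = #|T| always works, so this is the true minimum) *)
Definition chromatic_number (T : finType) (e : rel T) : nat :=
  \big[minn/#|T|]_(k < #|T|.+1 | colorable e k) k.

Definition num_nonedges (T : finType) (e : rel T) : nat :=
  #|[set A : {set T} | [exists x, exists y,
        [&& x != y, A == [set x; y] & ~~ e x y]]]|.

(* H is isomorphic to the Turán graph T(n, r) for some r: there is a partition
   of the vertices into r classes (class map f) such that two vertices are
   adjacent iff they lie in different classes, and any two class sizes differ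
   by at most one. *)
Definition is_turan (T : finType) (e : rel T) : Prop :=
  exists (r : nat) (f : T -> 'I_r),
    (forall x y, e x y = (f x != f y)) /\
    (forall i j : 'I_r, #|[set x | f x == i]| <= #|[set x | f x == j]|.+1)%N.

(* Main.v *)
Require Import Defs.
From mathcomp Require Import all_boot all_order all_algebra.
From mathcomp Require Import ring lra zify.
Import Order.TTheory GRing.Theory Num.Theory.
Set Implicit Arguments. Unset Strict Implicit.

Definition tt (n k : nat) : nat := (k * 'C(n %/ k, 2) + (n %/ k) * (n %% k))%N.

Lemma bin2E q : ('C(q, 2) * 2 + q = q * q)%N.
Proof.
have := mul_bin_diag q 1. rewrite bin1. case: q => [|q] //=. rewrite mulnC. lia.
Qed.

Lemma term_le c q : ((2*q+1)*c <= 'C(c,2)*2 + c + q*(q+1))%N.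
Proof. rewrite bin2E. case: (leqP c q) => h; nia. Qed.

Lemma term_eq c q : ((2*q+1)*c == 'C(c,2)*2 + c + q*(q+1))%N = (q <= c <= q + 1)%N.
Proof.
rewrite bin2E. apply/idP/idP => [/eqP E|/andP[h1 h2]].
  apply/andP; split; case: (leqP c q) => h; nia.
apply/eqP. have : c = q \/ c = q + 1 by lia. case=> ->; nia.
Qed.

Lemma sum_eq_le k (f g : nat -> nat) : (forall i, i < k -> f i <= g i) ->
  \sum_(i < k) f i = \sum_(i < k) g i -> forall i, i < k -> f i = g i.
Proof.
move=> le eqs i ik. apply/eqP; rewrite eqn_leq le //=. rewrite leqNgt; apply/negP => lt.
have : \sum_(j < k) f j < \sum_(j < k) g j.
  rewrite (bigD1 (Ordinal ik)) //= [X in _ < X](bigD1 (Ordinal ik)) //=.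
  apply: leq_ltn_trans (_ : _ <= f i + \sum_(j < k | j != Ordinal ik) g j) _.
    by rewrite leq_add2l leq_sum // => j _; apply: le.
  by rewrite ltn_add2r.
by rewrite eqs ltnn.
Qed.

Lemma tt_id n k : 0 < k -> ((2 * (n %/ k) + 1) * n = tt n k * 2 + n + k * ((n %/ k) * (n %/ k + 1)))%N.
Proof.
move=> k0. rewrite /tt. have hn := divn_eq n k. have hC := bin2E (n %/ k).
set q := n %/ k in hn hC *. set s := n %% k in hn *. rewrite {1 2}hn. nia.
Qed.

Lemma LB k n (c : nat -> nat) : 0 < k -> \sum_(i < k) c i = n ->
  tt n k <= \sum_(i < k) 'C(c i, 2) /\
  (tt n k = \sum_(i < k) 'C(c i, 2) <-> forall i, i < k -> n %/ k <= c i <= n %/ k + 1).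
Proof.
move=> k0 hs. set q := n %/ k.
have hA : (\sum_(i < k) (2*q+1) * c i = (2*q+1) * n)%N by rewrite -big_distrr hs.
have hB : (\sum_(i < k) ('C(c i,2)*2 + c i + q*(q+1)) =
          (\sum_(i < k) 'C(c i, 2)) * 2 + n + k * (q * (q+1)))%N.
  by rewrite !big_split /= hs sum_nat_const card_ord -big_distrl.
have hT := @tt_id n k k0. rewrite -/q in hT.
have hle : (\sum_(i < k) (2*q+1) * c i <= \sum_(i < k) ('C(c i,2)*2 + c i + q*(q+1)))%N.
  by apply: leq_sum => i _; apply: term_le.
split. rewrite hA hB hT in hle. lia.
split.
- move=> E i ik. rewrite -term_eq; apply/eqP.
  apply: (@sum_eq_le k (fun i => (2*q+1) * c i) (fun i => 'C(c i,2)*2 + c i + q*(q+1))) => //.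
    by move=> j _; apply: term_le.
  rewrite hA hB hT E. done.
- move=> H.
  have : (\sum_(i < k) (2*q+1) * c i = \sum_(i < k) ('C(c i,2)*2 + c i + q*(q+1)))%N.
    apply: eq_bigr => i _. apply/eqP. by rewrite term_eq H.
  rewrite hA hB hT. lia.
Qed.

Lemma pad_sum k k' (F : nat -> nat) : k <= k' ->
  \sum_(i < k') (if i < k then F i else 0) = \sum_(i < k) F i.
Proof. by move=> kk; rewrite (big_ord_widen k' F kk) [RHS]big_mkcond. Qed.

Lemma tt_anti n k k' : 0 < k -> k <= k' -> tt n k' <= tt n k.
Proof.
move=> k0 kk. set q := n %/ k. set s := n %% k.
pose bal i := (q + (i < s))%N.
have sk : s <= k by rewrite ltnW // ltn_mod.
have hsum : \sum_(i < k) bal i = n.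
  rewrite big_split /= sum_nat_const card_ord.
  have -> : \sum_(i < k) (i < s : nat) = s.
    transitivity (\sum_(i < k) (if i < s then (fun _ => 1%N) i else 0)).
      by apply: eq_bigr => i _; case: (i < s).
    by rewrite (@pad_sum s k (fun _ => 1%N) sk) sum_nat_const card_ord muln1.
  by rewrite /q /s mulnC -divn_eq.
have [_ [_ E]] := @LB k n bal k0 hsum.
have Ek : tt n k = \sum_(i < k) 'C(bal i, 2).
  apply: E => i _. rewrite /bal leq_addr /=. rewrite leq_add2l. by case: (i < s).
have k0' : 0 < k' by apply: leq_trans kk.
have hsum' : \sum_(i < k') (if i < k then bal i else 0) = n by rewrite pad_sum.
have [L _] := @LB k' n (fun i => if i < k then bal i else 0) k0' hsum'.
apply: leq_trans L _. rewrite Ek -(@pad_sum k k' (fun i => 'C(bal i, 2)) kk).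
apply: leq_sum => i _. by case: (i < k).
Qed.
Section G.
Variables (T : finType) (e : rel T).

Definition cls k (g : T -> 'I_k) (i : nat) : {set T} := [set x | (g x : nat) == i].
Definition csz k (g : T -> 'I_k) (i : nat) : nat := #|cls g i|.
Definition Dset k (g : T -> 'I_k) (i : nat) : {set {set T}} :=
  [set A : {set T} | (A \subset cls g i) && (#|A| == 2)].
Definition same k (g : T -> 'I_k) : {set {set T}} :=
  [set A : {set T} | [exists i : 'I_k, A \in Dset g i]].
Definition NE : {set {set T}} := [set A : {set T} | [exists x, exists y,
        [&& x != y, A == [set x; y] & ~~ e x y]]].

Lemma NE_card : num_nonedges e = #|NE|. Proof. by []. Qed.

Lemma sum_csz k (g : T -> 'I_k) : \sum_(i < k) csz g i = #|T|.
Proof.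
rewrite -sum1_card (partition_big g predT) //=.
apply: eq_bigr => i _. rewrite /csz -sum1_card. apply: eq_bigl => x.
by rewrite !inE.
Qed.

Lemma card_same k (g : T -> 'I_k) : #|same g| = \sum_(i < k) 'C(csz g i, 2).
Proof.
have E : forall i : 'I_k, 'C(csz g i, 2) = \sum_(A : {set T}) (A \in Dset g i : nat).
  move=> i. rewrite /csz -cards_draws -sum1_card big_mkcond /=.
  apply: eq_bigr => A _. by rewrite !inE; case: (_ && _).
rewrite (eq_bigr _ (fun i _ => E i)) exchange_big /=.
rewrite -sum1_card big_mkcond /=. apply: eq_bigr => A _.
case: (boolP (A \in same g)) => H.
- move: (H); rewrite inE => /existsP [i0 Hi0].
  rewrite (bigD1 i0) //= Hi0 big1 // => j nj.
  case: (boolP (A \in Dset g j)) => // Hj.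
  move: Hi0 Hj; rewrite !inE => /andP [s0 c0] /andP [s1 c1].
  have [x xA] : exists x, x \in A.
    by apply/set0Pn; rewrite -card_gt0 (eqP c0).
  move: (subsetP s0 x xA) (subsetP s1 x xA); rewrite !inE => /eqP h0 /eqP h1.
  by move: nj; rewrite -val_eqE /= -h0 -h1 eqxx.
- rewrite big1 // => j _. case: (boolP (A \in Dset g j)) => // Hj.
  by move: H; rewrite inE; case/existsP; exists j.
Qed.

Lemma same_NE k (g : T -> 'I_k) : (forall x y, e x y -> g x != g y) ->
  same g \subset NE.
Proof.
move=> pr. apply/subsetP => A. rewrite !inE => /existsP [i].
rewrite inE => /andP [sA /cards2P [x [y [xy AE]]]].
apply/existsP; exists x; apply/existsP; exists y. rewrite xy AE eqxx /=.
have gx : (g x : nat) == i by move: (subsetP sA x); rewrite AE !inE eqxx => /(_ isT).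
have gy : (g y : nat) == i by move: (subsetP sA y); rewrite AE !inE eqxx orbT => /(_ isT).
apply/negP => exy. move: (pr _ _ exy). by rewrite -val_eqE /= (eqP gx) (eqP gy) eqxx.
Qed.

Lemma NE_same k (g : T -> 'I_k) : (forall x y, e x y = (g x != g y)) ->
  NE \subset same g.
Proof.
move=> hg. apply/subsetP => A. rewrite !inE => /existsP [x /existsP [y /and3P [xy /eqP AE ne]]].
apply/existsP; exists (g x). rewrite !inE AE cards2 xy andbT.
apply/subsetP => z. rewrite !inE => /orP [] /eqP ->; first by [].
by move: ne; rewrite hg negbK => /eqP ->.
Qed.

End G.

Lemma colorableP (T : finType) (e : rel T) k :
  reflect (exists g : T -> 'I_k, forall x y, e x y -> g x != g y) (colorable e k).
Proof.
apply: (iffP existsP) => [[f /forallP hf]|[g hg]].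
  exists f => x y exy. by move: (hf x) => /forallP /(_ y) /implyP /(_ exy).
exists [ffun x => g x]. apply/forallP => x; apply/forallP => y; apply/implyP => exy.
by rewrite !ffunE hg.
Qed.

Lemma chi_col (T : finType) (e : rel T) : irreflexive e -> colorable e (chromatic_number e).
Proof.
move=> irr. rewrite /chromatic_number. apply: (big_ind (fun m => colorable e m)).
- apply/colorableP. exists (fun x => enum_rank x) => x y exy.
  apply/negP => /eqP /enum_rank_inj xy. by move: exy; rewrite xy irr.
- move=> a b ha hb. rewrite /minn. by case: (a < b).
- by move=> i.
Qed.

Lemma chi_le_n (T : finType) (e : rel T) : (chromatic_number e <= #|T|)%N.
Proof.
rewrite /chromatic_number. apply: (big_ind (fun m => m <= #|T|)%N) => //.
- move=> a b ha hb. by rewrite geq_min ha.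
- by move=> i _; rewrite -ltnS.
Qed.

Lemma bigmin_le (I : eqType) (r : seq I) (P : pred I) (F : I -> nat) x j :
  j \in r -> P j -> (\big[minn/x]_(i <- r | P i) F i <= F j)%N.
Proof.
elim: r => // a r IH. rewrite big_cons in_cons. case/orP => [/eqP <-|jr] Pj.
  by rewrite Pj geq_minl.
case: (P a); last by apply: IH.
by rewrite geq_min IH ?orbT.
Qed.

Lemma chi_le_k (T : finType) (e : rel T) k : colorable e k -> (k <= #|T|)%N ->
  (chromatic_number e <= k)%N.
Proof.
move=> ck kn. rewrite /chromatic_number.
have kn' : (k < #|T|.+1)%N by [].
exact: (@bigmin_le _ _ _ (fun i : 'I_#|T|.+1 => (i : nat)) _ (Ordinal kn') (mem_index_enum _) ck).
Qed.

Lemma col0 (T : finType) (e : rel T) : (0 < #|T|)%N -> ~~ colorable e 0.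
Proof.
move=> n0. apply/negP => /colorableP [g _].
case/card_gt0P: n0 => x _. by case: (g x).
Qed.

Lemma chi_gt0 (T : finType) (e : rel T) : irreflexive e -> (0 < #|T|)%N -> (0 < chromatic_number e)%N.
Proof.
move=> irr n0. rewrite lt0n. apply/negP => /eqP h.
have := chi_col irr. by rewrite h (negbTE (col0 e n0)).
Qed.

Lemma sum_lt k (f g : nat -> nat) i : (forall j, j < k -> f j <= g j)%N -> (i < k)%N -> (f i < g i)%N ->
  (\sum_(j < k) f j < \sum_(j < k) g j)%N.
Proof.
move=> le ik lt.
rewrite (bigD1 (Ordinal ik)) //= [X in (_ < X)%N](bigD1 (Ordinal ik)) //=.
apply: leq_ltn_trans (_ : _ <= f i + \sum_(j < k | j != Ordinal ik) g j)%N _.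
  by rewrite leq_add2l leq_sum // => j _; apply: le.
by rewrite ltn_add2r.
Qed.

Lemma bal_range r n (c : nat -> nat) : (0 < r)%N -> \sum_(i < r) c i = n ->
  (forall i j, i < r -> j < r -> c i <= (c j).+1)%N ->
  forall i, (i < r)%N -> (n %/ r <= c i <= n %/ r + 1)%N.
Proof.
move=> r0 hs hb i ir. have hn := divn_eq n r. have hm := ltn_mod n r. rewrite r0 in hm.
apply/andP; split.
- rewrite leqNgt; apply/negP => lt.
  have := @sum_lt r c (fun _ => (c i).+1) i (fun j jr => hb j i jr ir) ir (ltnSn _).
  rewrite hs sum_nat_const card_ord. nia.
- rewrite leqNgt; apply/negP => lt.
  have := @sum_lt r (fun _ => c i) (fun j => (c j).+1) i (fun j jr => hb i j ir jr) ir (ltnSn _).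
  rewrite sum_nat_const card_ord. rewrite (eq_bigr (fun j : 'I_r => c j + 1)%N); last by move=> j _; rewrite addn1.
  rewrite big_split /= hs sum_nat_const card_ord. nia.
Qed.

Local Open Scope ring_scope.
Lemma arith_main (n k : nat) : (0 < k)%N ->
  (((Num.ceil (n%:R / k%:R : rat))%:~R : rat)
     * (n%:R - k%:R / 2 * (Num.ceil (n%:R / k%:R - 1 : rat))%:~R)
   = (n + tt n k)%:R).
Proof.
move=> k0.
rewrite /tt. set q := (n %/ k)%N. set s := (n %% k)%N.
have hn : n = (q * k + s)%N by rewrite /q /s -divn_eq.
have hsk : (s < k)%N by rewrite /s ltn_mod.
have hC := bin2E q.
have hCr : ('C(q,2))%:R = ((q%:R * q%:R - q%:R) / 2 : rat).
  have hC' : (('C(q,2))%:R * 2%:R + q%:R : rat) = q%:R * q%:R by rewrite -!natrM -natrD hC.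
  by rewrite -hC'; field.
have kr : (k%:R : rat) != 0 by rewrite pnatr_eq0 -lt0n.
have hdiv : (n%:R / k%:R : rat) = q%:R + s%:R / k%:R.
  by rewrite hn natrD natrM mulrDl mulfK.
rewrite hdiv.
have s0 : (0 <= s%:R / k%:R :> rat) by rewrite divr_ge0.
have s1 : (s%:R / k%:R < 1 :> rat) by rewrite ltr_pdivrMr ?mul1r ?ltr_nat // ltr0n.
case: (posnP s) => [sz|sp].
- have c1 : Num.ceil (q%:R + s%:R / k%:R : rat) = q%:Z.
    apply: ceil_def. rewrite sz mul0r addr0 intrB /=. apply/andP; split; last by [].
    rewrite ltrBlDr. rewrite ltrDl //.
  have c2 : Num.ceil (q%:R + s%:R / k%:R - 1: rat) = (q%:Z - 1).
    apply: ceil_def. rewrite sz mul0r addr0 !intrB /=. apply/andP; split; last by [].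
    lra.
  by rewrite c1 c2 !intrB /= hn sz !natrD !natrM hCr; field.
- have c1 : Num.ceil (q%:R + s%:R / k%:R : rat) = (q%:Z + 1).
    apply: ceil_def. rewrite !intrD addrK /=. apply/andP; split.
      by rewrite ltrDl divr_gt0 ?ltr0n.
    by rewrite lerD2l ltW.
  have c2 : Num.ceil (q%:R + s%:R / k%:R - 1: rat) = q%:Z.
    apply: ceil_def. rewrite !intrB /=. have : 0 < s%:R / k%:R :> rat by rewrite divr_gt0 ?ltr0n.
    move=> hp. apply/andP; split; lra.
  by rewrite c1 c2 !intrD /= hn !natrD !natrM hCr; field.
Qed.

Theorem theorem1p2 (T : finType) (e : rel T) :
  simple_graph e -> (0 < #|T|)%N ->
  let n := #|T| in
  let chi := chromatic_number e in
  (((Num.ceil (n%:R / chi%:R : rat))%:~R : rat)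
     * (n%:R - chi%:R / 2 * (Num.ceil (n%:R / chi%:R - 1 : rat))%:~R)
   = (n + num_nonedges e)%:R)
  <-> is_turan e.
Proof.
move=> [sym irr] n0 n chi.
have c0 : (0 < chi)%N := chi_gt0 irr n0.
rewrite (@arith_main n chi c0).
have eqv : ((n + tt n chi)%:R = (n + num_nonedges e)%:R :> rat) <-> tt n chi = num_nonedges e.
  split; last by move=> ->.
  by move/eqP; rewrite eqr_nat eqn_add2l => /eqP.
have /colorableP [g pg] := chi_col irr.
have hsg : (\sum_(i < chi) csz g i = n)%N := sum_csz g.
have [LBg [LBe _]] := @LB chi n (csz g) c0 hsg.
have le1 : (#|same g| <= #|NE e|)%N by apply: subset_leq_card; apply: same_NE.
rewrite -card_same in LBg.
split => [/eqv H | H]; last apply/eqv.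
- have Ec : #|same g| = #|NE e|.
    apply/eqP; rewrite eqn_leq le1 /=. by rewrite -NE_card -H.
  have hS : same g =i NE e by apply/subset_cardP => //; apply: same_NE.
  have rng := LBe (etrans H (etrans (NE_card e) (etrans (esym Ec) (card_same g)))).
  exists chi, g. split.
  + move=> x y. case: (eqVneq (g x) (g y)) => h.
      apply/negP => exy. by move: (pg _ _ exy); rewrite h eqxx.
    case: (boolP (e x y)) => // nexy; exfalso.
    have xy : x != y by apply/eqP => xy; move: h; rewrite xy eqxx.
    have : [set x; y] \in NE e.
      rewrite inE; apply/existsP; exists x; apply/existsP; exists y.
      by rewrite xy eqxx nexy.
    rewrite -hS inE => /existsP [i]. rewrite inE => /andP [sA _].
    move: (subsetP sA x) (subsetP sA y). rewrite !inE !eqxx ?orbT /=.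
    move=> /(_ isT) /eqP hx /(_ isT) /eqP hy.
    by move: h; rewrite -val_eqE /= hx hy eqxx.
  + move=> i j.
    have cc : forall k : 'I_chi, #|[set x | g x == k]| = csz g k.
      by move=> k; apply: eq_card => x; rewrite !inE -val_eqE.
    rewrite !cc. have := rng i (ltn_ord i). have := rng j (ltn_ord j). lia.
- case: H => r [f [hef hbal]].
  have r0 : (0 < r)%N by case/card_gt0P: n0 => x _; case: (f x) => [m mr]; apply: leq_ltn_trans mr.
  have prf : forall x y, e x y -> f x != f y by move=> x y; rewrite hef.
  have Ec : #|NE e| = #|same f|.
    apply/eqP; rewrite eqn_leq; apply/andP; split; apply: subset_leq_card.
      by apply: NE_same.
    by apply: same_NE.
  have hsf : (\sum_(i < r) csz f i = n)%N := sum_csz f.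
  have cc : forall k : 'I_r, #|[set x | f x == k]| = csz f k.
    by move=> k; apply: eq_card => x; rewrite !inE -val_eqE.
  have hb : forall i j, (i < r -> j < r -> csz f i <= (csz f j).+1)%N.
    move=> i j ir jr. have := hbal (Ordinal ir) (Ordinal jr). by rewrite !cc.
  have rng := bal_range r0 hsf hb.
  have [_ [_ LBf]] := @LB r n (csz f) r0 hsf.
  have Er : tt n r = num_nonedges e by rewrite (LBf rng) -card_same NE_card Ec.
  have chr : (chi <= r)%N.
    case: (leqP r n) => rn.
      apply: chi_le_k => //. by apply/colorableP; exists f.
    exact: leq_trans (chi_le_n e) (ltnW rn).
  have := tt_anti n c0 chr.
  move: LBg le1. rewrite -NE_card -Er => a b c.
  apply: anti_leq; apply/andP; split; [exact: leq_trans a b | exact: c].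
Qed.
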